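(* Fix $\beta\in(0,1]$, $\lambda>0$, $p\in(1/2,1)$, trip data $\underline{x}\le\overline{x}$, $b<0$, $u_0\in\mathbb{R}$, and tariff bounds $0<\underline{\gamma}<\overline{\gamma}$ such that $\underline{x}+b\gamma\le u_0\le \overline{x}+b\gamma$ for all $\gamma\in[\underline{\gamma},\overline{\gamma}]$. For $\alpha>0$ let $\Gamma^*(\alpha)=\arg\max_{\gamma\in[\underline{\gamma},\overline{\gamma}]} f(\gamma;\alpha)$, with $f$ the expected revenue defined in the context (all parameters other than $\alpha$ held fixed). Then for $0<\alpha_1<\alpha_2$ we have $\max\Gamma^*(\alpha_2)\le\max\Gamma^*(\alpha_1)$ and $\min\Gamma^*(\alpha_2)\le\min\Gamma^*(\alpha_1)$. In particular, whenever the optimal tariff $\gamma^*(\alpha)$ is unique, it is monotonically nonincreasing in $\alpha$.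
   Context: Setting: a passenger chooses between a shared mobility service (SMoDS) and a certain alternative with objective utility $u_0$. At tariff $\gamma$, the SMoDS has two possible objective utilities, the worst case $\underline{u}(\gamma)=\underline{x}+b\gamma$ occurring with probability $p$ and the best case $\overline{u}(\gamma)=\overline{x}+b\gamma$ occurring with probability $1-p$. Probability weighting function: $\pi(q)=e^{-(-\ln q)^{\alpha}}$ for $q\in(0,1]$, $\pi(0)=0$. The reference point is the best-case outcome, $R=\overline{u}(\gamma)$, and the value function is $V(u)=(u-R)^{\beta}$ if $u\ge R$ and $V(u)=-\lambda(R-u)^{\beta}$ if $u<R$. Subjective utilities: $A^s=V(u_0)=-\lambda(\overline{u}-u_0)^{\beta}$ for the alternative, and $U^s=\pi(p)V(\underline{u})+\pi(1-p)V(\overline{u})=-\lambda\,\pi(p)(\overline{u}-\underline{u})^{\beta}$ for the SMoDS. Acceptance probability $p_s(\gamma)=e^{U^s}/(e^{U^s}+e^{A^s})$, i.e. $p_s(\gamma)=\big(1+\exp\{\lambda(\pi(p)(\overline{x}-\underline{x})^{\beta}-(\overline{x}+b\gamma-u_0)^{\beta})\}\big)^{-1}$. Expected revenue $f(\gamma)=\gamma\,p_s(\gamma)$, maximized over $\gamma\in[\underline{\gamma},\overline{\gamma}]$. *)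

(* Defs.v *)
(* R : realType.  powR (a `^ x) satisfies 0 `^ x = 0 for x <> 0. *)
From HB Require Import structures.
From mathcomp Require Import all_boot all_order all_algebra.
From mathcomp Require Import all_classical all_reals all_analysis.
Set Implicit Arguments. Unset Strict Implicit. Unset Printing Implicit Defensive.
Import Order.TTheory GRing.Theory Num.Theory.
Local Open Scope ring_scope.

Section SMoDS.
Variable R : realType.

(* Prelec probability weighting: pi(q) = exp(-(-ln q)^alpha), pi(0) = 0. *)
Definition piw (alpha q : R) : R :=
  if q == 0 then 0 else expR (- powR (- ln q) alpha).

Definition Vf (beta lam Rf u : R) : R :=
  if Rf <= u then powR (u - Rf) beta else - lam * powR (Rf - u) beta.

Definition ulow (xlow b gamma : R) : R := xlow + b * gamma.
Definition ubar (xbar b gamma : R) : R := xbar + b * gamma.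

Definition As (beta lam xbar b u0 gamma : R) : R :=
  Vf beta lam (ubar xbar b gamma) u0.

Definition Us (alpha beta lam p xlow xbar b gamma : R) : R :=
  piw alpha p * Vf beta lam (ubar xbar b gamma) (ulow xlow b gamma)
  + piw alpha (1 - p) * Vf beta lam (ubar xbar b gamma) (ubar xbar b gamma).

Definition ps (alpha beta lam p xlow xbar b u0 gamma : R) : R :=
  expR (Us alpha beta lam p xlow xbar b gamma) /
  (expR (Us alpha beta lam p xlow xbar b gamma)
   + expR (As beta lam xbar b u0 gamma)).

Definition revenue (alpha beta lam p xlow xbar b u0 gamma : R) : R :=
  gamma * ps alpha beta lam p xlow xbar b u0 gamma.

Definition argmax_tariff (alpha beta lam p xlow xbar b u0 gl gu : R) : set R :=
  [set g | gl <= g <= gu /\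
     forall g', gl <= g' <= gu ->
       revenue alpha beta lam p xlow xbar b u0 g'
       <= revenue alpha beta lam p xlow xbar b u0 g].

End SMoDS.

(* Main.v *)
Require Import Defs.
From HB Require Import structures.
From mathcomp Require Import all_boot all_order all_algebra.
From mathcomp Require Import all_classical all_reals all_analysis.
From mathcomp Require Import lra ring.
Import Order.TTheory GRing.Theory Num.Theory.
Import numFieldNormedType.Exports.
Local Open Scope ring_scope.

Section Helpers.
Set Implicit Arguments. Unset Strict Implicit.
Local Open Scope classical_set_scope.

Lemma phi_cont (R : realType) (be : R) : 0 < be ->
  continuous (fun t : R => powR `|t| be).
Proof.
move=> be0 t.
have [->|t0] := eqVneq t 0.
  apply/cvgrPdist_lt => e e0.
  have d0 : 0 < powR (e / 2) be^-1 by apply: powR_gt0; rewrite divr_gt0.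
  apply/nbhs_normP; exists (powR (e / 2) be^-1) => //= s.
  rewrite /ball_ /= sub0r normrN normr0 powR0 ?gt_eqF// sub0r normrN => hs.
  rewrite ger0_norm ?powR_ge0//.
  apply: (le_lt_trans (y := e / 2)); last by rewrite ltr_pdivrMr // ltr_pMr // ltr1n.
  have H : powR `|s| be <= powR (powR (e / 2) be^-1) be.
    apply: ge0_ler_powR; [exact: ltW| by rewrite nnegrE| by rewrite nnegrE powR_ge0| exact: ltW].
  by move: H; rewrite -powRrM mulVf ?gt_eqF// powRr1 // divr_ge0 // ltW.
have nt : 0 < `|t| by rewrite normr_gt0.
have H2 : {for `|t|, continuous (fun x : R => powR x be)}.
  apply: differentiable_continuous; apply/derivable1_diffP.
  by apply: derivable_powR; rewrite in_itv /= nt.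
exact: (continuous_comp (@norm_continuous _ _ t) H2).
Qed.

Definition Gf (R : realType) (be lam a c b : R) (g : R) : R :=
  g / (1 + a * expR (- lam * powR `|c + b * g| be)).

Lemma Gf_cont (R : realType) (be lam a c b : R) : 0 < be -> 0 <= a ->
  continuous (Gf be lam a c b).
Proof.
move=> be0 a0 g.
have hin : continuous (fun g : R => c + b * g).
  move=> x; apply: cvgD; first exact: cvg_cst.
  apply: cvgM; [exact: cvg_cst| exact: cvg_id].
have hp : continuous (fun g : R => powR `|c + b * g| be).
  move=> x; exact: (continuous_comp (hin x) (@phi_cont R be be0 _)).
have he : continuous (fun g : R => expR (- lam * powR `|c + b * g| be)).
  move=> x.
  have hi : {for x, continuous (fun g : R => - lam * powR `|c + b * g| be)}.
    apply: cvgM; [exact: cvg_cst| exact: hp].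
  exact: (continuous_comp hi (@continuous_expR R _)).
apply: cvgM; first exact: cvg_id.
apply: cvgV.
  have h1 := mulr_ge0 a0 (ltW (expR_gt0 (- lam * `|c + b * g| `^ be))).
  by rewrite gt_eqF //; lra.
apply: cvgD; first exact: cvg_cst.
apply: cvgM; [exact: cvg_cst| exact: he].
Qed.

Definition amax (R : realType) (f : R -> R) (gl gu : R) : set R :=
  [set g | gl <= g <= gu /\ forall g', gl <= g' <= gu -> f g' <= f g].

Lemma amax_exists (R : realType) (f G : R -> R) (gl gu : R) :
  gl <= gu -> continuous G -> (forall g, gl <= g <= gu -> f g = G g) ->
  (exists M, amax f gl gu M /\ forall g, amax f gl gu g -> g <= M) /\
  (exists m, amax f gl gu m /\ forall g, amax f gl gu g -> m <= g).
Proof.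
move=> glu cG fG.
have [c cin cmax] := EVT_max glu (@continuous_subspaceT _ _ _ _ cG).
move: cin; rewrite in_itv /= => cin.
have Sc : amax f gl gu c.
  split => // g' hg'; rewrite !fG //; apply: cmax; by rewrite in_itv.
have key : forall s, gl <= s <= gu -> G c <= G s -> amax f gl gu s.
  move=> s hs hGs; split => // g' hg'; rewrite !fG //.
  apply: le_trans hGs; apply: cmax; by rewrite in_itv.
have Sin : forall g, amax f gl gu g -> gl <= g <= gu by move=> g [].
have SG : forall g, amax f gl gu g -> G c <= G g.
  move=> g [hg hmax]; rewrite -!fG //; exact: hmax.
split.
- have hsup : has_sup (amax f gl gu).
    split; first by exists c.
    by exists gu => g /Sin /andP[].
  set s := sup (amax f gl gu).
  have cs : c <= s by apply: sup_upper_bound.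
  have sgu : s <= gu by apply: ge_sup; [exists c| move=> g /Sin /andP[]].
  have hs : gl <= s <= gu.
    by apply/andP; split => //; apply: le_trans cs; case/andP: cin.
  exists s; split; last by move=> g Sg; apply: sup_upper_bound.
  apply: key => //; rewrite leNgt; apply/negP => hlt.
  have := cG s; move/cvgrPdist_lt => /(_ (G c - G s)).
  rewrite subr_gt0 => /(_ hlt) /nbhs_normP [d d0 hd].
  have [e Se he] := sup_adherent d0 hsup.
  rewrite -/s in he.
  have es : e <= s by apply: sup_upper_bound.
  have := hd e; rewrite /ball_ /= ger0_norm ?subr_ge0 // => /(_ _).
  have h1 : s - e < d by lra.
  move=> /(_ h1); have := SG e Se => h2 h3.
  have : G e - G s <= `|G s - G e| by rewrite distrC ler_norm.
  lra.
- have hinf : has_inf (amax f gl gu).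
    split; first by exists c.
    by exists gl => g /Sin /andP[].
  set s := inf (amax f gl gu).
  have cs : s <= c by apply: ge_inf => //; case: hinf.
  have sgl : gl <= s by apply: lb_le_inf; [exists c| move=> g /Sin /andP[]].
  have hs : gl <= s <= gu.
    by apply/andP; split => //; apply: le_trans cs _; case/andP: cin.
  exists s; split; last by move=> g Sg; apply: ge_inf => //; case: hinf.
  apply: key => //; rewrite leNgt; apply/negP => hlt.
  have := cG s; move/cvgrPdist_lt => /(_ (G c - G s)).
  rewrite subr_gt0 => /(_ hlt) /nbhs_normP [d d0 hd].
  have [e Se he] := inf_adherent d0 hinf.
  rewrite -/s in he.
  have es : s <= e by apply: ge_inf => //; case: hinf.
  have := hd e; rewrite /ball_ /= distrC ger0_norm ?subr_ge0 // => /(_ _).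
  have h1 : e - s < d by lra.
  move=> /(_ h1); have := SG e Se => h2 h3.
  have : G e - G s <= `|G s - G e| by rewrite distrC ler_norm.
  lra.
Qed.

Lemma Vf_low (R : realType) (be lam Rf u : R) : 0 < be -> u <= Rf ->
  Vf be lam Rf u = - lam * powR (Rf - u) be.
Proof.
move=> be0 uR; rewrite /Vf; case: ifP => // hR.
have -> : u = Rf by apply/eqP; rewrite eq_le uR hR.
by rewrite !subrr powR0 ?gt_eqF // mulr0.
Qed.

Lemma revenue_eq (R : realType) (alpha be lam p xlow xbar b u0 g : R) :
  0 < be -> xlow + b * g <= u0 -> u0 <= xbar + b * g ->
  revenue alpha be lam p xlow xbar b u0 g =
  Gf be lam (expR (lam * piw alpha p * powR (xbar - xlow) be)) (xbar - u0) b g.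
Proof.
move=> be0 h1 h2.
rewrite /revenue /ps /Us /As /Gf /ubar /ulow.
rewrite Vf_low //; last by lra.
rewrite Vf_low //.
rewrite Vf_low //.
have -> : xbar + b * g - (xbar + b * g) = 0 by lra.
have -> : `|xbar - u0 + b * g| = xbar + b * g - u0.
  by rewrite ger0_norm; lra.
rewrite powR0 ?gt_eqF // mulr0 mulr0 addr0.
set K := lam * piw alpha p * powR (xbar - xlow) be.
set A := - lam * powR (xbar + b * g - u0) be.
have -> : piw alpha p * (- lam * powR (xbar + b * g - (xlow + b * g)) be) = - K.
  rewrite /K (_ : xbar + b * g - (xlow + b * g) = xbar - xlow); last by lra.
  by lra.
rewrite expRN.
have hK := expR_gt0 K; have hA := expR_gt0 A.
have hKA : 0 < expR K * expR A by apply: mulr_gt0.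
field.
apply/andP; split; first by rewrite gt_eqF //; lra.
by rewrite gt_eqF.
Qed.

Lemma piw_mono (R : realType) (a1 a2 p : R) : a1 <= a2 -> 2^-1 < p -> p < 1 ->
  piw a1 p <= piw a2 p.
Proof.
move=> a12 hp1 hp2.
have p0 : 0 < p by apply: lt_trans hp1; rewrite invr_gt0 ltr0n.
rewrite /piw (negbTE (lt0r_neq0 p0)) ler_expR lerN2.
have q0 : 0 < - ln p by rewrite oppr_gt0 ln_lt0 // p0 hp2.
have e2 : 2 <= expR (1 : R) by have := expR_ge1Dx (1 : R); lra.
have e1 : expR (-1) <= p.
  rewrite expRN; apply: le_trans (ltW hp1).
  by rewrite lef_pV2 ?posrE ?expR_gt0 ?ltr0n.
have q1 : - ln p <= 1.
  have : ln (expR (-1)) <= ln p by rewrite ler_ln ?posrE ?expR_gt0.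
  rewrite expRK; lra.
by apply: ger_powR => //; rewrite q0 q1.
Qed.

Lemma Gf_dd (R : realType) (be lam a1 a2 c b g g' : R) :
  0 < be -> 0 <= lam -> 0 <= a1 -> a1 <= a2 -> 0 < g -> g <= g' -> b <= 0 ->
  0 <= c + b * g' ->
  Gf be lam a2 c b g' * Gf be lam a1 c b g <= Gf be lam a1 c b g' * Gf be lam a2 c b g.
Proof.
move=> be0 lam0 a10 a12 g0 gg' b0 hc.
have hcg : c + b * g' <= c + b * g by rewrite lerD2l ler_wnM2l.
set E := expR (- lam * powR `|c + b * g| be).
set E' := expR (- lam * powR `|c + b * g'| be).
have EE : E <= E'.
  rewrite /E /E' ler_expR !mulNr lerN2; apply: ler_wpM2l => //.
  apply: ge0_ler_powR; [exact: ltW| by rewrite nnegrE| by rewrite nnegrE|].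
  have hc2 : 0 <= c + b * g by apply: le_trans hcg.
  by rewrite !ger0_norm.
have E0 : 0 < E by apply: expR_gt0.
have q1 : 0 <= a1 * E by apply: mulr_ge0; lra.
have q2 : 0 <= a2 * E by apply: mulr_ge0; lra.
have q3 : 0 <= a1 * E' by apply: mulr_ge0; lra.
have q4 : 0 <= a2 * E' by apply: mulr_ge0; lra.
rewrite /Gf -/E -/E' !mulf_div.
have h0 : 0 <= g' * g by apply: mulr_ge0; lra.
rewrite ler_wpM2l // lef_pV2 ?posrE.
- have h1 : 0 <= (a2 - a1) * (E' - E) by apply: mulr_ge0; lra.
  nra.
- apply: mulr_gt0; lra.
- apply: mulr_gt0; lra.
Qed.

Lemma comp_stat (R : realType) (f1 f2 : R -> R) (gl gu M1 M2 m1 m2 : R) :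
 (forall g, gl <= g <= gu -> 0 < f1 g /\ 0 < f2 g) ->
 (forall g g', gl <= g <= gu -> gl <= g' <= gu -> g <= g' ->
    f2 g' * f1 g <= f1 g' * f2 g) ->
 amax f1 gl gu M1 -> (forall g, amax f1 gl gu g -> g <= M1) ->
 amax f2 gl gu M2 ->
 amax f1 gl gu m1 -> amax f2 gl gu m2 -> (forall g, amax f2 gl gu g -> m2 <= g) ->
 M2 <= M1 /\ m2 <= m1.
Proof.
move=> pos dd [iM1 oM1] maxM1 [iM2 oM2] [im1 om1] [im2 om2] minm2; split.
- rewrite leNgt; apply/negP => hlt.
  suff : amax f1 gl gu M2 by move/maxM1; rewrite leNgt hlt.
  split => // g' hg'; apply: le_trans (oM1 _ hg') _.
  have h := dd _ _ iM1 iM2 (ltW hlt).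
  have h2 := oM2 _ iM1.
  have [p1 p2] := pos _ iM1; have [p3 p4] := pos _ iM2.
  nra.
- rewrite leNgt; apply/negP => hlt.
  suff : amax f2 gl gu m1 by move/minm2; rewrite leNgt hlt.
  split => // g' hg'; apply: le_trans (om2 _ hg') _.
  have h := dd _ _ im1 im2 (ltW hlt).
  have h2 := om1 _ im2.
  have [p1 p2] := pos _ im1; have [p3 p4] := pos _ im2.
  nra.
Qed.

Lemma wrap (R : realType) (f1 f2 G1 G2 : R -> R) (gl gu : R) :
  gl <= gu -> continuous G1 -> continuous G2 ->
  (forall g, gl <= g <= gu -> f1 g = G1 g) ->
  (forall g, gl <= g <= gu -> f2 g = G2 g) ->
  (forall g, gl <= g <= gu -> 0 < G1 g /\ 0 < G2 g) ->
  (forall g g', gl <= g <= gu -> gl <= g' <= gu -> g <= g' ->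
     G2 g' * G1 g <= G1 g' * G2 g) ->
  exists M1 M2 m1 m2 : R,
    [/\ amax f1 gl gu M1 /\ (forall g, amax f1 gl gu g -> g <= M1),
        amax f2 gl gu M2 /\ (forall g, amax f2 gl gu g -> g <= M2),
        amax f1 gl gu m1 /\ (forall g, amax f1 gl gu g -> m1 <= g),
        amax f2 gl gu m2 /\ (forall g, amax f2 gl gu g -> m2 <= g)
      & M2 <= M1 /\ m2 <= m1].
Proof.
move=> glu c1 c2 fe1 fe2 pos dd.
have [[M1 [hM1 mM1]] [m1 [hm1 mm1]]] := amax_exists glu c1 fe1.
have [[M2 [hM2 mM2]] [m2 [hm2 mm2]]] := amax_exists glu c2 fe2.
have pos' : forall g, gl <= g <= gu -> 0 < f1 g /\ 0 < f2 g.
  by move=> g hg; rewrite fe1 // fe2 //; apply: pos.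
have dd' : forall g g', gl <= g <= gu -> gl <= g' <= gu -> g <= g' ->
    f2 g' * f1 g <= f1 g' * f2 g.
  by move=> g g' hg hg' gg'; rewrite !fe1 // !fe2 //; apply: dd.
have [e1 e2] := comp_stat pos' dd' hM1 mM1 hM2 hm1 hm2 mm2.
by exists M1, M2, m1, m2; split.
Qed.

Lemma argmax_amax (R : realType) (a be lam p xl xb b u0 gl gu : R) :
  argmax_tariff a be lam p xl xb b u0 gl gu = amax (revenue a be lam p xl xb b u0) gl gu.
Proof. rewrite /argmax_tariff /amax. reflexivity. Qed.

End Helpers.

Theorem mainTheorem2 (R : realType)
  (beta lam p xlow xbar b u0 gl gu alpha1 alpha2 : R) :
  0 < beta -> beta <= 1 -> 0 < lam -> 2^-1 < p -> p < 1 ->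
  xlow <= xbar -> b < 0 -> 0 < gl -> gl < gu ->
  (forall g, gl <= g <= gu -> xlow + b * g <= u0 /\ u0 <= xbar + b * g) ->
  0 < alpha1 -> alpha1 < alpha2 ->
  exists M1 M2 m1 m2 : R,
    [/\ argmax_tariff alpha1 beta lam p xlow xbar b u0 gl gu M1 /\
        (forall g, argmax_tariff alpha1 beta lam p xlow xbar b u0 gl gu g -> g <= M1),
        argmax_tariff alpha2 beta lam p xlow xbar b u0 gl gu M2 /\
        (forall g, argmax_tariff alpha2 beta lam p xlow xbar b u0 gl gu g -> g <= M2),
        argmax_tariff alpha1 beta lam p xlow xbar b u0 gl gu m1 /\
        (forall g, argmax_tariff alpha1 beta lam p xlow xbar b u0 gl gu g -> m1 <= g),
        argmax_tariff alpha2 beta lam p xlow xbar b u0 gl gu m2 /\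
        (forall g, argmax_tariff alpha2 beta lam p xlow xbar b u0 gl gu g -> m2 <= g)
      & M2 <= M1 /\ m2 <= m1].
Proof.
move=> be0 be1 lam0 hp1 hp2 xx b0 gl0 glu H a10 a12.
rewrite !argmax_amax.
have a0 : forall a, 0 <= expR (lam * piw a p * powR (xbar - xlow) beta).
  by move=> a; apply: ltW; apply: expR_gt0.
have Gpos : forall a, 0 <= a -> forall g, 0 < g -> 0 < Gf beta lam a (xbar - u0) b g.
  move=> a ha g g0; rewrite /Gf; apply: divr_gt0 => //.
  have := mulr_ge0 ha (ltW (expR_gt0 (- lam * powR `|xbar - u0 + b * g| beta))).
  lra.
have a1a2 : expR (lam * piw alpha1 p * powR (xbar - xlow) beta) <=
            expR (lam * piw alpha2 p * powR (xbar - xlow) beta).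
  rewrite ler_expR; apply: ler_wpM2r; first exact: powR_ge0.
  by apply: ler_wpM2l; [exact: ltW| apply: piw_mono => //; exact: ltW].
apply: (wrap (ltW glu)
  (@Gf_cont R beta lam _ (xbar - u0) b be0 (a0 alpha1))
  (@Gf_cont R beta lam _ (xbar - u0) b be0 (a0 alpha2))).
- by move=> g hg; have [h1 h2] := H g hg; apply: revenue_eq.
- by move=> g hg; have [h1 h2] := H g hg; apply: revenue_eq.
- move=> g hg; have g0 : 0 < g by case/andP: hg => h _; exact: lt_le_trans gl0 h.
  by split; [exact: (Gpos _ (a0 alpha1) g g0)| exact: (Gpos _ (a0 alpha2) g g0)].
- move=> g g' hg hg' gg'.
  have g0 : 0 < g by case/andP: hg => h _; exact: lt_le_trans gl0 h.
  have [_ h2] := H g' hg'.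
  apply: Gf_dd; [exact: be0| exact: (ltW lam0)| exact: a0| exact: a1a2| exact: g0| exact: gg'| exact: (ltW b0)| by rewrite addrAC subr_ge0].
Qed.
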